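(* Let $L=\mathbb{Z}[d^{\pm 1}, n^{\pm 1}, s^{\pm 1}]$ be the Laurent polynomial ring in three variables, and let $X$ be any $L$-module. Define binary operations on $X$ by \[x\ast y=(-dsn^2)x+ny\quad\text{and}\quad x\cdot y=dx+sy .\] Then $(X,\ast,\cdot)$ is a biquasile. Such a biquasile is called an Alexander (or linear) biquasile.
   Context: A biquasile is a set $X$ with binary operations $\ast,\cdot,\backslash^{\ast},/^{\ast},\backslash,/ : X\times X\to X$ satisfying the following two groups of conditions. First, $\ast$ and $\cdot$ are quasigroup operations with the given left and right inverse operations: for all $x,y\in X$, \[y\backslash^{\ast}(y\ast x)=x=(x\ast y)/^{\ast}y,\qquad y\backslash(y\cdot x)=x=(x\cdot y)/y.\] Second, for all $a,b,x,y\in X$, \[a\ast(x\cdot [y\ast(a\cdot b)]) = (a\ast[x\cdot y])\ast(x\cdot [y\ast([a\ast(x\cdot y)]\cdot b)])\] and \[y\ast([a\ast (x\cdot y)]\cdot b) = (y\ast[a\cdot b])\ast([a\ast (x\cdot [y\ast(a\cdot b)])]\cdot b).\] The claim asserts that inverse operations $\backslash^{\ast},/^{\ast},\backslash,/$ exist making $X$ satisfy all of these conditions with the given $\ast$ and $\cdot$. *)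

(* Defs.v *)
From HB Require Import structures.
From mathcomp Require Import all_boot all_algebra.
Set Implicit Arguments. Unset Strict Implicit. Unset Printing Implicit Defensive.
Import GRing.Theory.
Local Open Scope ring_scope.

Definition biquasile (X : Type) (star dot : X -> X -> X) : Prop :=
  exists ldivs rdivs ldiv rdiv : X -> X -> X,
    (forall x y : X, ldivs y (star y x) = x /\ rdivs (star x y) y = x) /\
    (forall x y : X, ldiv y (dot y x) = x /\ rdiv (dot x y) y = x) /\
    (forall a b x y : X,
        star a (dot x (star y (dot a b)))
        = star (star a (dot x y))
               (dot x (star y (dot (star a (dot x y)) b)))) /\
    (forall a b x y : X,
        star y (dot (star a (dot x y)) b)
        = star (star y (dot a b))
               (dot (star a (dot x (star y (dot a b)))) b)).

Definition alex_star (R : comUnitRingType) (X : lmodType R) (d n s : R)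
  (x y : X) : X := (- (d * s * n ^+ 2)) *: x + n *: y.
Definition alex_dot (R : comUnitRingType) (X : lmodType R) (d n s : R)
  (x y : X) : X := d *: x + s *: y.

(* Main.v *)
Require Import Defs.
From HB Require Import structures.
From mathcomp Require Import all_boot all_algebra.
From mathcomp Require Import ring.
Import GRing.Theory.
Local Open Scope ring_scope.

Section Lin.
Variables (R : comUnitRingType) (X : lmodType R) (a b x y : X).
Definition F (ca cb cx cy : R) : X := ca *: a + cb *: b + cx *: x + cy *: y.
Lemma FD p1 p2 p3 p4 q1 q2 q3 q4 :
  F p1 p2 p3 p4 + F q1 q2 q3 q4 = F (p1+q1) (p2+q2) (p3+q3) (p4+q4).
Proof.
rewrite /F !scalerDl addrACA; congr (_ + _); rewrite addrACA; congr (_ + _).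
by rewrite addrACA.
Qed.
Lemma FZ c p1 p2 p3 p4 : c *: F p1 p2 p3 p4 = F (c*p1) (c*p2) (c*p3) (c*p4).
Proof. by rewrite /F !scalerDr !scalerA. Qed.
Lemma Fa : a = F 1 0 0 0. Proof. by rewrite /F !scale0r scale1r !addr0. Qed.
Lemma Fb : b = F 0 1 0 0. Proof. by rewrite /F !scale0r scale1r addr0 add0r addr0. Qed.
Lemma Fx : x = F 0 0 1 0. Proof. by rewrite /F !scale0r scale1r addr0 !add0r. Qed.
Lemma Fy : y = F 0 0 0 1. Proof. by rewrite /F !scale0r scale1r !add0r. Qed.

Variables d n s : R.
Lemma ax1 : alex_star d n s a (alex_dot d n s x (alex_star d n s y (alex_dot d n s a b)))
        = alex_star d n s (alex_star d n s a (alex_dot d n s x y))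
               (alex_dot d n s x (alex_star d n s y (alex_dot d n s (alex_star d n s a (alex_dot d n s x y)) b))).
Proof.
rewrite /alex_star /alex_dot.
rewrite Fa Fb Fx Fy.
rewrite !(FZ, FD); congr F; ring.
Qed.
Lemma ax2 : alex_star d n s y (alex_dot d n s (alex_star d n s a (alex_dot d n s x y)) b)
        = alex_star d n s (alex_star d n s y (alex_dot d n s a b))
               (alex_dot d n s (alex_star d n s a (alex_dot d n s x (alex_star d n s y (alex_dot d n s a b)))) b).
Proof.
rewrite /alex_star /alex_dot.
rewrite Fa Fb Fx Fy.
rewrite !(FZ, FD); congr F; ring.
Qed.
End Lin.

Theorem proposition4 (R : comUnitRingType) (d n s : R)
  (hd : d \is a GRing.unit) (hn : n \is a GRing.unit) (hs : s \is a GRing.unit)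
  (X : lmodType R) :
  biquasile (alex_star d n s : X -> X -> X) (alex_dot d n s : X -> X -> X).
Proof.
have hA : (- (d * s * n ^+ 2)) \is a GRing.unit.
  by rewrite unitrN !unitrM hd hs ?hn ?(unitrX 2 hn).
exists (fun y z => n^-1 *: (z - (- (d * s * n ^+ 2)) *: y)),
       (fun z y => (- (d * s * n ^+ 2))^-1 *: (z - n *: y)),
       (fun y z => s^-1 *: (z - d *: y)),
       (fun z y => d^-1 *: (z - s *: y)).
split; [|split; [|split]].
- move=> x y; rewrite /alex_star; split.
  + by rewrite addrAC subrr add0r scalerA mulVr // scale1r.
  + by rewrite addrK scalerA mulVr // scale1r.
- move=> x y; rewrite /alex_dot; split.
  + by rewrite addrAC subrr add0r scalerA mulVr // scale1r.
  + by rewrite addrK scalerA mulVr // scale1r.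
- by move=> a b x y; apply: ax1.
- by move=> a b x y; apply: ax2.
Qed.
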